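(* Let $A$ be an AUF algebra, let $e\in A$ be an idempotent, and let $e=\varepsilon_1+\cdots+\varepsilon_n$ with $\varepsilon_1,\dots,\varepsilon_n$ mutually orthogonal primitive idempotents. The following are equivalent: (1) $e$ is generating; (2) every primitive idempotent of $A$ is equivalent to $\varepsilon_i$ for some $i$; (3) every irreducible quasicoherent left $A$-module is isomorphic to $A\varepsilon_i/\mathrm{rad}(A\varepsilon_i)$ for some $i$.
   Context: All algebras are associative $\mathbb C$-algebras, not necessarily unital. An idempotent is $e$ with $e^2=e$; for idempotents $f\le e$ means $ef=fe=f$; a nonzero idempotent is primitive if its only sub-idempotents are $0$ and itself. An algebra $A$ is AUF if there is a family $(e_i)_{i\in\mathfrak I}$ of mutually orthogonal idempotents with $\dim e_iAe_j<\infty$ and $A=\sum_{i,j}e_iAe_j$. A left $A$-module $M$ is quasicoherent if $\xi\in A\xi$ for all $\xi\in M$. Irreducible means nonzero with no nonzero proper submodules. An idempotent $e$ is generating if every irreducible quasicoherent left $A$-module is a quotient of $Ae$. Two idempotents $p,q$ are equivalent if there are $u\in qAp$, $v\in pAq$ with $vu=p$, $uv=q$. For a primitive idempotent $\varepsilon$ of an AUF algebra, $A\varepsilon$ has a unique maximal proper left $A$-submodule, denoted $\mathrm{rad}(A\varepsilon)$. *)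

(* Defs.v *)
From HB Require Import structures.
From mathcomp Require Import all_boot all_order all_algebra.
From mathcomp Require Import complex.
From mathcomp Require Import Rstruct.
Set Implicit Arguments. Unset Strict Implicit. Unset Printing Implicit Defensive.
Import Order.TTheory GRing.Theory Num.Theory.
Local Open Scope ring_scope.

Definition CC : fieldType := (Rdefinitions.R)[i].

(* Associative, not necessarily unital C-algebras: a C-vector space with a
   bilinear associative multiplication. *)
Record Alg := {
  A_sort :> lmodType CC;
  amul : A_sort -> A_sort -> A_sort;
  amulA : forall x y z, amul x (amul y z) = amul (amul x y) z;
  amulDl : forall x y z, amul (x + y) z = amul x z + amul y z;
  amulDr : forall x y z, amul x (y + z) = amul x y + amul x z;
  amulZl : forall (c : CC) x y, amul (c *: x) y = c *: amul x y;
  amulZr : forall (c : CC) x y, amul x (c *: y) = c *: amul x y }.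

Record Mod (A : Alg) := {
  M_sort :> lmodType CC;
  act : A -> M_sort -> M_sort;
  actA : forall a b m, act (amul a b) m = act a (act b m);
  actDl : forall a b m, act (a + b) m = act a m + act b m;
  actDr : forall a m m', act a (m + m') = act a m + act a m';
  actZl : forall (c : CC) a m, act (c *: a) m = c *: act a m;
  actZr : forall (c : CC) a m, act a (c *: m) = c *: act a m }.

Section Defs.
Variable A : Alg.
Local Notation "x * y" := (amul x y) : ring_scope.

Definition is_idem (e : A) := e * e = e.

Definition orthogonal (e f : A) := e * f = 0 /\ f * e = 0.

Definition idem_le (f e : A) := e * f = f /\ f * e = f.

Definition primitive (e : A) :=
  is_idem e /\ e <> 0 /\
  forall f, is_idem f -> idem_le f e -> f = 0 \/ f = e.

Definition corner (e f : A) (x : A) := exists a : A, x = e * a * f.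

Definition fin_dim (P : A -> Prop) :=
  exists s : seq A, forall x, P x ->
    exists c : 'I_(size s) -> CC, x = \sum_(k < size s) c k *: s`_k.

Definition AUF :=
  exists (I : Type) (e : I -> A),
    (forall i, is_idem (e i)) /\
    (forall i j, i <> j -> e i * e j = 0) /\
    (forall i j, fin_dim (corner (e i) (e j))) /\
    (forall x : A, exists s : seq (I * I * A),
        x = \sum_(t <- s) e t.1.1 * t.2 * e t.1.2).

Definition idem_equiv (p q : A) :=
  exists u v, corner q p u /\ corner p q v /\ v * u = p /\ u * v = q.

Variable M : Mod A.

Definition quasicoherent := forall xi : M, exists a : A, act a xi = xi.

Definition submodule (P : M -> Prop) :=
  P 0 /\ (forall x y, P x -> P y -> P (x + y)) /\
  (forall (c : CC) x, P x -> P (c *: x)) /\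
  (forall a x, P x -> P (act a x)).

Definition irreducible :=
  (exists x : M, x <> 0) /\
  forall P, submodule P -> (forall x, P x -> x = 0) \/ (forall x, P x).

Definition Ae (e : A) (x : A) := exists a : A, x = a * e.

Definition hom_from_Ae (e : A) (f : A -> M) :=
  (forall x y, Ae e x -> Ae e y -> f (x + y) = f x + f y) /\
  (forall (c : CC) x, Ae e x -> f (c *: x) = c *: f x) /\
  (forall a x, Ae e x -> f (a * x) = act a (f x)).

Definition onto_from_Ae (e : A) (f : A -> M) :=
  forall m : M, exists2 x, Ae e x & f x = m.

Definition quotient_of_Ae (e : A) :=
  exists f : A -> M, hom_from_Ae e f /\ onto_from_Ae e f.

(* M is isomorphic to (A e) / N, N a submodule of A e (first isomorphism
   theorem: a surjective homomorphism A e -> M with kernel exactly N) *)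
Definition iso_quot_Ae (e : A) (N : A -> Prop) :=
  exists f : A -> M, hom_from_Ae e f /\ onto_from_Ae e f /\
    (forall x, Ae e x -> (f x = 0 <-> N x)).

End Defs.

Section Rad.
Variable A : Alg.
Local Notation "x * y" := (amul x y) : ring_scope.

Definition submod_Ae (e : A) (N : A -> Prop) :=
  (forall x, N x -> Ae e x) /\ N 0 /\
  (forall x y, N x -> N y -> N (x + y)) /\
  (forall (c : CC) x, N x -> N (c *: x)) /\
  (forall a x, N x -> N (a * x)).

Definition proper_submod_Ae (e : A) (N : A -> Prop) :=
  submod_Ae e N /\ exists2 x, Ae e x & ~ N x.

(* N = rad(A e): the proper submodule of A e containing every proper
   submodule (i.e. the unique maximal proper submodule) *)
Definition is_rad (e : A) (N : A -> Prop) :=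
  proper_submod_Ae e N /\
  forall P, proper_submod_Ae e P -> forall x, P x -> N x.

Definition generating (e : A) :=
  forall M : Mod A, irreducible M -> quasicoherent M -> quotient_of_Ae M e.

End Rad.

(* Main.v *)
Require Import Defs.
From HB Require Import structures.
From mathcomp Require Import all_boot all_order all_algebra.
From mathcomp Require Import complex Rstruct.
From Stdlib Require Import Classical ClassicalEpsilon.
Set Implicit Arguments. Unset Strict Implicit. Unset Printing Implicit Defensive.
Import Order.TTheory GRing.Theory Num.Theory.
Local Open Scope ring_scope.
Local Infix "**" := amul (at level 40, left associativity).

Section Basic.
Variable A : Alg.
Implicit Types x y z a b : A.

Lemma amul0r x : (0 : A) ** x = 0.
Proof. by have := amulZl 0 (0:A) x; rewrite !scale0r. Qed.
Lemma amulr0 x : x ** (0 : A) = 0.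
Proof. by have := amulZr 0 x (0:A); rewrite !scale0r. Qed.
Lemma amulNr x y : (- x) ** y = - (x ** y).
Proof. by rewrite -scaleN1r amulZl scaleN1r. Qed.
Lemma amulrN x y : x ** (- y) = - (x ** y).
Proof. by rewrite -scaleN1r amulZr scaleN1r. Qed.
Lemma amulBl x y z : (x - y) ** z = x ** z - y ** z.
Proof. by rewrite amulDl amulNr. Qed.
Lemma amulBr x y z : x ** (y - z) = x ** y - x ** z.
Proof. by rewrite amulDr amulrN. Qed.
Lemma amul_suml (I : Type) (r : seq I) (P : pred I) (F : I -> A) y :
  (\sum_(i <- r | P i) F i) ** y = \sum_(i <- r | P i) (F i ** y).
Proof.
apply: (big_morph (fun z => z ** y)); last exact: amul0r.
by move=> u v; rewrite amulDl.
Qed.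
Lemma amul_sumr (I : Type) (r : seq I) (P : pred I) (F : I -> A) y :
  y ** (\sum_(i <- r | P i) F i) = \sum_(i <- r | P i) (y ** F i).
Proof.
apply: (big_morph (fun z => y ** z)); last exact: amulr0.
by move=> u v; rewrite amulDr.
Qed.

Variable M : Mod A.
Implicit Types m : M.
Lemma act0l m : act (0 : A) m = 0.
Proof. by have := actZl 0 (0:A) m; rewrite !scale0r. Qed.
Lemma act0r a : act a (0 : M) = 0.
Proof. by have := actZr 0 a (0:M); rewrite !scale0r. Qed.
Lemma actNl a m : act (- a) m = - act a m.
Proof. by rewrite -scaleN1r actZl scaleN1r. Qed.
Lemma actNr a m : act a (- m) = - act a m.
Proof. by rewrite -scaleN1r actZr scaleN1r. Qed.
Lemma actBl a b m : act (a - b) m = act a m - act b m.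
Proof. by rewrite actDl actNl. Qed.
Lemma actBr a m m' : act a (m - m') = act a m - act a m'.
Proof. by rewrite actDr actNr. Qed.
Lemma act_suml (I : Type) (r : seq I) (P : pred I) (F : I -> A) m :
  act (\sum_(i <- r | P i) F i) m = \sum_(i <- r | P i) act (F i) m.
Proof.
apply: (big_morph (fun z => act z m)); last exact: act0l.
by move=> u v; rewrite actDl.
Qed.
End Basic.
Section Lin.
Variable A : Alg.
Definition inspan (s : seq A) (x : A) :=
  exists c : 'I_(size s) -> CC, x = \sum_(k < size s) c k *: s`_k.

Lemma dep (s vs : seq A) : (forall v, v \in vs -> inspan s v) ->
  (size s < size vs)%N ->
  exists c : 'I_(size vs) -> CC, (exists j, c j != 0) /\
    \sum_(k < size vs) c k *: vs`_k = 0.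
Proof.
move=> Hin Hlt.
have H k : exists c : 'I_(size s) -> CC, vs`_k = \sum_(l < size s) c l *: s`_l.
  case: (ltnP k (size vs)) => hk; first exact/Hin/mem_nth.
  by exists (fun _ => 0); rewrite nth_default // big1 // => l _; rewrite scale0r.
pose C k := proj1_sig (constructive_indefinite_description _ (H k)).
have HC k : vs`_k = \sum_(l < size s) C k l *: s`_l.
  exact: (proj2_sig (constructive_indefinite_description _ (H k))).
pose Mx : 'M[CC]_(size vs, size s) := \matrix_(k, l) C k l.
have nf : ~~ row_free Mx.
  rewrite /row_free; apply/negP => /eqP e.
  by have := rank_leq_col Mx; rewrite e leqNgt Hlt.
have : kermx Mx != 0 by rewrite kermx_eq0.
case/matrix0Pn => i [j Hij].
exists (fun k => kermx Mx i k); split; first by exists j.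
have K0 l : \sum_(k < size vs) kermx Mx i k * C k l = 0.
  have := mulmx_ker Mx; move/matrixP/(_ i l).
  rewrite !mxE => e; rewrite -[in RHS]e.
  by under [RHS]eq_bigr => k0 _ do rewrite [X in _ * X]mxE.
under eq_bigr => k _ do rewrite HC scaler_sumr.
rewrite exchange_big /= big1 // => l _.
by under eq_bigr => k _ do rewrite scalerA; rewrite -scaler_suml K0 scale0r.
Qed.
End Lin.
Section Span.
Variable A : Alg.
Implicit Types x y z a b : A.

Lemma inspanP (s : seq A) x : inspan s x <->
  exists cc : nat -> CC, x = \sum_(0 <= k < size s) cc k *: s`_k.
Proof.
split.
  case=> c ->; exists (fun n => if insub n is Some k then c k else 0).
  by rewrite big_mkord; apply: eq_bigr => k _; rewrite valK.
by case=> cc ->; exists (fun k => cc k); rewrite big_mkord.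
Qed.

Lemma inspan0 (s : seq A) : inspan s 0.
Proof. by exists (fun _ => 0); rewrite big1 // => k _; rewrite scale0r. Qed.

Lemma inspanD (s s' : seq A) x y : inspan s x -> inspan s' y -> inspan (s ++ s') (x + y).
Proof.
move=> /inspanP [c ->] /inspanP [c' ->]; apply/inspanP.
exists (fun k => if (k < size s)%N then c k else c' (k - size s)%N).
rewrite size_cat [in RHS](@big_cat_nat _ _ _ (size s)) ?leq0n ?leq_addr //=; congr (_ + _).
  by apply: eq_big_nat => k /andP[_ hk]; rewrite hk nth_cat hk.
rewrite -{1}(add0n (size s)) big_addn.
have -> : (size s + size s' - size s = size s')%N by rewrite addnC addnK.
apply: eq_big_nat => k _.
by rewrite nth_cat ltnNge leq_addl /= addnK.
Qed.

Lemma fin_dim_sub (P Q : A -> Prop) : (forall x, P x -> Q x) -> fin_dim Q -> fin_dim P.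
Proof. by move=> PQ [s Hs]; exists s => x /PQ /Hs. Qed.

Lemma fin_dim_add (P Q : A -> Prop) : fin_dim P -> fin_dim Q ->
  fin_dim (fun x => exists y z, P y /\ Q z /\ x = y + z).
Proof.
move=> [s Hs] [s' Hs']; exists (s ++ s') => x [y [z [Py [Qz ->]]]].
exact: inspanD (Hs _ Py) (Hs' _ Qz).
Qed.

Lemma fin_dim0 : fin_dim (fun x : A => x = 0).
Proof. by exists [::] => x ->; apply: inspan0. Qed.

Variables (I : Type) (e : I -> A).
Hypothesis fde : forall i j, fin_dim (corner (e i) (e j)).
Definition Lsum (s : seq (I * I * A)) := \sum_(t <- s) e t.1.1 ** t.2 ** e t.1.2.

Lemma fd1 i s2 : fin_dim (fun x => exists a, x = e i ** a ** Lsum s2).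
Proof.
elim: s2 => [|t s2 IH].
  apply: fin_dim_sub fin_dim0 => x [a ->]; by rewrite /Lsum big_nil amulr0.
apply: fin_dim_sub (fin_dim_add (fde i t.1.2) IH) => x [a ->].
rewrite /Lsum big_cons -/(Lsum s2) amulDr.
exists (e i ** a ** e t.1.1 ** t.2 ** e t.1.2), (e i ** a ** Lsum s2); split.
  by exists (a ** e t.1.1 ** t.2); rewrite !amulA.
by split; [exists a | rewrite !amulA].
Qed.

Lemma fd2 s1 s2 : fin_dim (fun x => exists a, x = Lsum s1 ** a ** Lsum s2).
Proof.
elim: s1 => [|t s1 IH].
  apply: fin_dim_sub fin_dim0 => x [a ->]; by rewrite /Lsum big_nil !amul0r.
apply: fin_dim_sub (fin_dim_add (fd1 t.1.1 s2) IH) => x [a ->].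
rewrite /Lsum big_cons -/(Lsum s1) -/(Lsum s2) !amulDl.
exists (e t.1.1 ** t.2 ** e t.1.2 ** a ** Lsum s2), (Lsum s1 ** a ** Lsum s2); split.
  by exists (t.2 ** e t.1.2 ** a); rewrite !amulA.
by split; [exists a | ].
Qed.
End Span.

Lemma AUF_fd (A : Alg) : AUF A -> forall x y : A, fin_dim (corner x y).
Proof.
case=> I [e [_ [_ [fde hs]]]] x y.
have [s1 ->] := hs x; have [s2 ->] := hs y.
exact: (fd2 fde s1 s2).
Qed.
Section LocalUnit.
Variable A : Alg.
Variables (I : Type) (e : I -> A).
Hypothesis eid : forall i, e i ** e i = e i.
Hypothesis eorth : forall i j, i <> j -> e i ** e j = 0.

Lemma ecomm i j : e i ** e j = e j ** e i.
Proof. by case: (classic (i = j)) => [->|h] //; rewrite !eorth // => h'; apply: h. Qed.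

Definition U (s : seq (I * I * A)) :=
  foldr (fun t u => u + e t.1.1 - u ** e t.1.1) 0 s.

Lemma Ucomm s j : U s ** e j = e j ** U s.
Proof.
elim: s => [|t s IH] /=; first by rewrite amul0r amulr0.
rewrite amulBl amulDl amulBr amulDr -!amulA (ecomm t.1.1 j) !amulA IH.
by rewrite ecomm.
Qed.

Lemma Uunit s : U s ** Lsum e s = Lsum e s.
Proof.
elim: s => [|t s IH] /=; first by rewrite /Lsum big_nil amulr0.
rewrite /Lsum big_cons -/(Lsum e s) amulDr.
set i := t.1.1; set y := t.2 ** e t.1.2.
have -> : e i ** t.2 ** e t.1.2 = e i ** y by rewrite /y amulA.
have h1 : (U s + e i - U s ** e i) ** (e i ** y) = e i ** y.
  rewrite amulBl amulDl !amulA eid -(amulA (U s) (e i) (e i)) eid.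
  by rewrite addrAC subrr add0r.
have h2 : (U s + e i - U s ** e i) ** Lsum e s = Lsum e s.
  rewrite amulBl amulDl IH Ucomm -amulA IH.
  by rewrite -addrA subrr addr0.
by rewrite h1 h2.
Qed.
End LocalUnit.

Lemma AUF_lunit (A : Alg) : AUF A -> forall x : A, exists u, u ** x = x.
Proof.
case=> I [e [eid [eorth [_ hs]]]] x.
have [s ->] := hs x; exists (U e s); exact: Uunit.
Qed.
Section Local.
Variable A : Alg.
Variable p : A.
Hypothesis pid : p ** p = p.
Hypothesis pnz : p <> 0.
Hypothesis pprim : forall f, is_idem f -> idem_le f p -> f = 0 \/ f = p.
Hypothesis fdp : fin_dim (corner p p).

Definition inB (x : A) := p ** x = x /\ x ** p = x.

Fixpoint pw_rec (x : A) (k : nat) : A := if k is k'.+1 then x ** pw_rec x k' else p.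
Fact pw_key : unit. Proof. exact: tt. Qed.
Definition pw := locked_with pw_key pw_rec.
Lemma pw0 x : pw x 0 = p. Proof. by rewrite /pw unlock. Qed.
Lemma pwS x k : pw x k.+1 = x ** pw x k. Proof. by rewrite /pw unlock. Qed.

Lemma inBp : inB p. Proof. by split. Qed.
Lemma inBM x y : inB x -> inB y -> inB (x ** y).
Proof. by move=> [h1 h2] [h3 h4]; split; [rewrite amulA h1 | rewrite -amulA h4]. Qed.
Lemma inBD x y : inB x -> inB y -> inB (x + y).
Proof. by move=> [h1 h2] [h3 h4]; split; rewrite ?amulDr ?amulDl ?h1 ?h2 ?h3 ?h4. Qed.
Lemma inBN x : inB x -> inB (- x).
Proof. by move=> [h1 h2]; split; rewrite ?amulrN ?amulNr ?h1 ?h2. Qed.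
Lemma inBZ c x : inB x -> inB (c *: x).
Proof. by move=> [h1 h2]; split; rewrite ?amulZr ?amulZl ?h1 ?h2. Qed.
Lemma inB0 : inB 0.
Proof. by split; rewrite ?amulr0 ?amul0r. Qed.
Lemma inBsum (I : Type) (r : seq I) (P : pred I) (F : I -> A) :
  (forall i, P i -> inB (F i)) -> inB (\sum_(i <- r | P i) F i).
Proof. move=> h; apply: big_ind => //; [exact: inB0 | exact: inBD]. Qed.
Lemma inB_proj w : inB (p ** w ** p).
Proof. by split; rewrite ?amulA ?pid // -!amulA pid. Qed.

Lemma pw_inB x k : inB x -> inB (pw x k).
Proof. move=> hx; elim: k => [|k IH]; rewrite ?pw0 ?pwS; [exact: inBp | exact: inBM]. Qed.

Lemma pwS' x k : inB x -> pw x k.+1 = pw x k ** x.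
Proof.
move=> [h1 h2]; elim: k => [|k IH]; first by rewrite pwS !pw0 h1 h2.
by rewrite [LHS]pwS {1}IH amulA -pwS.
Qed.

Lemma pwD x a b : inB x -> pw x (a + b) = pw x a ** pw x b.
Proof.
move=> hx; elim: a => [|a IH]; first by rewrite add0n pw0; case: (pw_inB b hx).
by rewrite addSn !pwS IH amulA.
Qed.

Lemma comm_pw x y b : inB x -> inB y -> y ** x = x ** y -> y ** pw x b = pw x b ** y.
Proof.
move=> hx [h1 h2] hc; elim: b => [|b IH]; first by rewrite pw0 h1 h2.
by rewrite pwS amulA hc -amulA IH amulA.
Qed.

Lemma pwM x g n : inB x -> inB g -> g ** x = x ** g -> pw (x ** g) n = pw x n ** pw g n.
Proof.
move=> hx hg hc; elim: n => [|n IH]; first by rewrite !pw0 pid.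
by rewrite !pwS IH -[LHS]amulA (amulA g) (comm_pw _ hx hg hc) -!amulA.
Qed.

Lemma nil_or_unit x : inB x ->
  (exists w, inB w /\ w ** x = p /\ x ** w = p) \/ (exists k, pw x k = 0).
Proof.
move=> hx; case: fdp => s hs.
pose vs := mkseq (pw x) (size s).+1.
have hvs : forall v, v \in vs -> inspan s v.
  move=> v /mapP [k _ ->]; apply: hs; exists (pw x k).
  by case: (pw_inB k hx) => -> ->.
have [c [[j cj] hsum]] := dep hvs (ltac:(by rewrite size_mkseq)).
pose cn (n : nat) := if insub n is Some k then c k else 0.
have hsum' : \sum_(0 <= n < (size s).+1) cn n *: pw x n = 0.
  rewrite -{1}(size_mkseq (pw x) (size s).+1) big_mkord -[in RHS]hsum; apply: eq_bigr => k _.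
  rewrite /cn valK nth_mkseq //; case: k => k hk /=; move: hk; by rewrite /vs size_mkseq.
have exn : exists n, cn n != 0 by exists j; rewrite /cn valK.
pose K := ex_minn exn.
have cK : cn K != 0 by rewrite /K; case: ex_minnP.
have cltK n : (n < K)%N -> cn n = 0.
  rewrite /K; case: ex_minnP => m _ hm hn; apply/eqP; apply: contraTT hn.
  by rewrite -leqNgt => /hm.
have Klt : (K < (size s).+1)%N.
  move: cK; rewrite /cn; case: insubP => [u hu _ _|_]; last by rewrite eqxx.
  by move: hu; rewrite /vs size_mkseq.
(* the relation x^K = x^(K+1) ** g *)
pose g := - (cn K)^-1 *: \sum_(K.+1 <= n < (size s).+1) cn n *: pw x (n - K.+1).
have hg : inB g.
  by apply/inBZ/inBsum => i _; apply/inBZ/pw_inB.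
pose T := \sum_(K.+1 <= n < (size s).+1) cn n *: pw x (n - K.+1).
have hT : pw x K.+1 ** T = - (cn K *: pw x K).
  apply/eqP; rewrite -addr_eq0 addrC; apply/eqP.
  rewrite -[RHS]hsum' (@big_cat_nat _ _ _ K) //; last exact: ltnW.
  have -> : \sum_(0 <= n < K) cn n *: pw x n = 0.
    by rewrite big_nat big1 // => n /andP[_ /cltK ->]; rewrite scale0r.
  rewrite /= add0r big_ltn //; congr (_ + _).
  rewrite /T amul_sumr; apply: eq_big_nat => n /andP[hn _].
  by rewrite amulZr -pwD // subnKC.
have rel : pw x K = pw x K.+1 ** g.
  rewrite /g amulZr -/T hT scalerN scaleNr opprK scalerA mulVf ?scale1r //.
have rel' : pw x K.+2 ** g = pw x K.+1.
  by rewrite pwS -amulA -rel -pwS.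
have comb : forall y, (forall n, y n ** x = x ** y n) ->
    forall (r : seq nat) (P : pred nat) (d : nat -> CC),
    (\sum_(i <- r | P i) d i *: y i) ** x = x ** \sum_(i <- r | P i) d i *: y i.
  move=> y hy r P d; apply: (big_ind (fun z => z ** x = x ** z)).
  - by rewrite amul0r amulr0.
  - by move=> a b ha hb; rewrite amulDl amulDr ha hb.
  - by move=> i _; rewrite amulZl amulZr hy.
have hc : g ** x = x ** g.
  rewrite /g amulZl amulZr; congr (_ *: _); apply: comb => n.
  by rewrite -pwS' // pwS.
pose J := K.+1.
pose h := x ** g.
have hh : inB h by apply: inBM.
have E1 : pw x J ** h = pw x J by rewrite /h amulA -pwS' // rel'.
have E2 : forall j, pw x J ** pw h j = pw x J.
  elim=> [|jj IH]; first by rewrite pw0; case: (pw_inB J hx).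
  by rewrite pwS amulA E1 IH.
have E3 : pw h J = pw x J ** pw g J by apply: pwM.
pose f := pw x J ** pw g J.
have cGX : pw g J ** pw x J = pw x J ** pw g J.
  apply: comm_pw => //; first exact: pw_inB.
  by rewrite (comm_pw _ hg hx) //.
have hf : inB f by apply: inBM; apply: pw_inB.
have ff : f ** f = f.
  rewrite /f -amulA (amulA (pw g J)) cGX !amulA.
  by rewrite -(amulA (pw x J) (pw x J)) -E3 E2 E3.
case: (pprim ff (hf)) => hf0.
  right; exists J; rewrite -(E2 J) E3 amulA.
  have -> : pw x J ** pw x J ** pw g J = pw x J ** f by rewrite /f amulA.
  by rewrite hf0 amulr0.
left; exists (pw x K ** pw g J); split; first by apply: inBM; apply: pw_inB.
split.
  rewrite -amulA -(comm_pw _ hg hx) // amulA -pwS' //; exact: hf0.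
by rewrite amulA -pwS; exact: hf0.
Qed.

Lemma proj_linv w x : inB x -> w ** x = p -> (p ** w ** p) ** x = p.
Proof. by move=> [h1 h2] hw; rewrite -amulA h1 -amulA hw pid. Qed.

Lemma nil_not_linv x k : inB x -> pw x k = 0 -> forall w, w ** x <> p.
Proof.
move=> hx hk w hw; have hw' := proj_linv hx hw.
set w' := p ** w ** p in hw'.
have hB : inB w' by apply: inB_proj.
have cl : forall j, pw w' j ** pw x j = p.
  elim=> [|j IH]; first by rewrite !pw0 pid.
  rewrite pwS' // pwS -amulA (amulA w') hw'.
  by case: (pw_inB j hx) => -> _.
by apply: pnz; rewrite -(cl k) hk amulr0.
Qed.

Lemma nonunit_add x y : inB x -> inB y -> (forall w, w ** x <> p) ->
  (forall w, w ** y <> p) -> forall w, w ** (x + y) <> p.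
Proof.
move=> hx hy nx ny w hw; have hw' := proj_linv (inBD hx hy) hw.
set w' := p ** w ** p in hw'.
have hB : inB w' by apply: inB_proj.
pose n := w' ** y.
have hn : inB n by apply: inBM.
have nn : forall z, z ** n <> p by move=> z; rewrite /n amulA; apply: ny.
case: (nil_or_unit hn) => [[w'' [_ [hw'' _]]]|[k hk]]; first exact: (nn w'').
pose z := \sum_(0 <= j < k) pw n j.
have hz : z ** (p - n) = p.
  rewrite /z amul_suml.
  under eq_bigr => j _ do rewrite amulBr -pwS' // (proj2 (pw_inB j hn)).
  rewrite -(opprK (\sum_(0 <= i < k) (pw n i - pw n i.+1))) -sumrN.
  under eq_bigr => j _ do rewrite opprB.
  by rewrite telescope_sumr // hk pw0 sub0r opprK.
have hx' : w' ** x = p - n by rewrite -hw' amulDr addrK.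
by apply: (nx (z ** w')); rewrite -amulA hx' hz.
Qed.
End Local.
Section Quot.
Variable A : Alg.
Variable p : A.
Hypothesis pid : p ** p = p.
Hypothesis pnz : p <> 0.
Hypothesis pprim : forall f, is_idem f -> idem_le f p -> f = 0 \/ f = p.
Hypothesis fdp : fin_dim (corner p p).
Hypothesis lu : forall x : A, exists u, u ** x = x.

Definition NN (x : A) := x ** p = x /\ forall b, b ** x <> p.

Lemma NN0 : NN 0.
Proof. by split; [rewrite amul0r | move=> b; rewrite amulr0 => /esym]. Qed.

Lemma NND x y : NN x -> NN y -> NN (x + y).
Proof.
move=> [hx nx] [hy ny]; split; first by rewrite amulDl hx hy.
move=> b hb.
have hB z : z ** p = z -> inB p (p ** b ** z).
  by move=> hz; split; rewrite ?amulA ?pid // -amulA hz.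
have nl z : z ** p = z -> (forall c, c ** z <> p) -> forall w, w ** (p ** b ** z) <> p.
  by move=> hz nz w; rewrite !amulA; apply: nz.
apply: (nonunit_add pid pprim fdp (hB _ hx) (hB _ hy) (nl _ hx nx) (nl _ hy ny) (w:=p)).

by rewrite -amulDr -amulA hb !pid.
Qed.

Lemma NNZ c x : NN x -> NN (c *: x).
Proof.
move=> [hx nx]; split; first by rewrite amulZl hx.
by move=> b; rewrite amulZr -amulZl; apply: nx.
Qed.

Lemma NNN x : NN x -> NN (- x).
Proof. by move=> h; rewrite -scaleN1r; apply: NNZ. Qed.

Lemma NNM a x : NN x -> NN (a ** x).
Proof.
move=> [hx nx]; split; first by rewrite -amulA hx.
by move=> b; rewrite amulA; apply: nx.
Qed.

Definition RR (x y : A) := NN ((x - y) ** p).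

Lemma RRrefl x : RR x x.
Proof. by rewrite /RR subrr amul0r; apply: NN0. Qed.
Lemma RRsym x y : RR x y -> RR y x.
Proof. by rewrite /RR => h; rewrite -opprB amulNr; apply: NNN. Qed.
Lemma RRtrans x y z : RR x y -> RR y z -> RR x z.
Proof.
rewrite /RR => h1 h2; have -> : x - z = (x - y) + (y - z) by rewrite addrA subrK.
by rewrite amulDl; apply: NND.
Qed.
Lemma RRD x x' y y' : RR x x' -> RR y y' -> RR (x + y) (x' + y').
Proof.
rewrite /RR => h1 h2; have -> : x + y - (x' + y') = (x - x') + (y - y').
  by rewrite opprD addrACA.
by rewrite amulDl; apply: NND.
Qed.
Lemma RRN x x' : RR x x' -> RR (- x) (- x').
Proof. by rewrite /RR => h; rewrite -opprD amulNr; apply: NNN. Qed.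
Lemma RRZ c x x' : RR x x' -> RR (c *: x) (c *: x').
Proof. by rewrite /RR => h; rewrite -scalerBr amulZl; apply: NNZ. Qed.
Lemma RRM a x x' : RR x x' -> RR (a ** x) (a ** x').
Proof. by rewrite /RR => h; rewrite -amulBr -amulA; apply: NNM. Qed.

Definition RRb (x y : A) : bool := if excluded_middle_informative (RR x y) then true else false.
Lemma RRbP x y : RRb x y <-> RR x y.
Proof. by rewrite /RRb; case: excluded_middle_informative. Qed.

Definition rr (x : A) : A := choose (RRb x) x.
Lemma rrP x : RR x (rr x).
Proof. by apply/RRbP; apply: chooseP; apply/RRbP; apply: RRrefl. Qed.
Lemma rr_eq x y : RR x y -> rr x = rr y.
Proof.
move=> h; rewrite /rr (@eq_choose _ (RRb x) (RRb y)).
  by apply: choose_id; apply/RRbP; [apply: RRsym | apply: RRrefl].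
move=> z; apply/idP/idP => /RRbP hz; apply/RRbP.
  exact: RRtrans (RRsym h) hz.
exact: RRtrans h hz.
Qed.
Lemma rr_id x : rr (rr x) = rr x.
Proof. by apply: rr_eq; apply: RRsym; apply: rrP. Qed.

Definition QT := {x : A | rr x == x}.
HB.instance Definition _ := [isSub for @sval A (fun x => rr x == x)].
HB.instance Definition _ := [Choice of QT by <:].
Definition pi (x : A) : QT := exist _ (rr x) (introT eqP (rr_id x)).

Lemma piE x y : pi x = pi y <-> RR x y.
Proof.
split.
  move=> /(congr1 val) /= h; apply: RRtrans (rrP x) _; rewrite h; exact: RRsym (rrP y).
by move=> h; apply: val_inj => /=; apply: rr_eq.
Qed.
Lemma pi_val (q : QT) : pi (val q) = q.
Proof. by apply: val_inj => /=; apply/eqP; exact: (valP q). Qed.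
Lemma pi_rr x : pi (rr x) = pi x.
Proof. by apply/piE; apply: RRsym; apply: rrP. Qed.

Definition qadd (a b : QT) := pi (val a + val b).
Definition qopp (a : QT) := pi (- val a).
Definition qz := pi 0.
Definition qscale (c : CC) (a : QT) := pi (c *: val a).
Definition qact (a : A) (q : QT) := pi (a ** val q).

Lemma qaddE x y : qadd (pi x) (pi y) = pi (x + y).
Proof. by apply/piE; apply: RRD; apply: RRsym; apply: rrP. Qed.
Lemma qoppE x : qopp (pi x) = pi (- x).
Proof. by apply/piE; apply: RRN; apply: RRsym; apply: rrP. Qed.
Lemma qscaleE c x : qscale c (pi x) = pi (c *: x).
Proof. by apply/piE; apply: RRZ; apply: RRsym; apply: rrP. Qed.
Lemma qactE a x : qact a (pi x) = pi (a ** x).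
Proof. by apply/piE; apply: RRM; apply: RRsym; apply: rrP. Qed.

Lemma qaddA : associative qadd.
Proof.
move=> a b c; rewrite -(pi_val a) -(pi_val b) -(pi_val c).
by rewrite !qaddE addrA.
Qed.
Lemma qaddC : commutative qadd.
Proof. by move=> a b; rewrite -(pi_val a) -(pi_val b) !qaddE addrC. Qed.
Lemma qadd0 : left_id qz qadd.
Proof. by move=> a; rewrite -(pi_val a) /qz qaddE add0r. Qed.
Lemma qaddN : left_inverse qz qopp qadd.
Proof. by move=> a; rewrite -(pi_val a) qoppE qaddE addNr. Qed.
HB.instance Definition _ := GRing.isZmodule.Build QT qaddA qaddC qadd0 qaddN.
Lemma piD x y : pi x + pi y = pi (x + y). Proof. exact: qaddE. Qed.
Lemma pi0 : (0 : QT) = pi 0. Proof. by []. Qed.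

Lemma qscaleA c d (v : QT) : qscale c (qscale d v) = qscale (c * d) v.
Proof. by rewrite -(pi_val v) !qscaleE scalerA. Qed.
Lemma qscale1 : left_id 1 qscale.
Proof. by move=> v; rewrite -(pi_val v) qscaleE scale1r. Qed.
Lemma qscaleDr : right_distributive qscale +%R.
Proof.
by move=> c u v; rewrite -(pi_val u) -(pi_val v) piD !qscaleE piD scalerDr.
Qed.
Lemma qscaleDl (v : QT) : {morph qscale^~ v: a b / a + b}.
Proof. by move=> a b; rewrite -(pi_val v) !qscaleE piD scalerDl. Qed.
HB.instance Definition _ := GRing.Zmodule_isLmodule.Build CC QT qscaleA qscale1 qscaleDr qscaleDl.
Lemma piZ c x : c *: pi x = pi (c *: x). Proof. exact: qscaleE. Qed.

Lemma qactA a b (m : QT) : qact (a ** b) m = qact a (qact b m).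
Proof. by rewrite -(pi_val m) !qactE amulA. Qed.
Lemma qactDl a b (m : QT) : qact (a + b) m = qact a m + qact b m.
Proof. by rewrite -(pi_val m) !qactE piD amulDl. Qed.
Lemma qactDr a (m m' : QT) : qact a (m + m') = qact a m + qact a m'.
Proof. by rewrite -(pi_val m) -(pi_val m') piD !qactE piD amulDr. Qed.
Lemma qactZl (c : CC) a (m : QT) : qact (c *: a) m = c *: qact a m.
Proof. by rewrite -(pi_val m) !qactE piZ amulZl. Qed.
Lemma qactZr (c : CC) a (m : QT) : qact a (c *: m) = c *: qact a m.
Proof. by rewrite -(pi_val m) piZ !qactE piZ amulZr. Qed.

Definition QM : Mod A := Build_Mod qactA qactDl qactDr qactZl qactZr.

Lemma RR0 x y : (x - y) ** p = 0 -> RR x y.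
Proof. by rewrite /RR => ->; apply: NN0. Qed.

Lemma pip_nz : pi p <> 0.
Proof.
rewrite pi0 => /piE [_ h]; apply: (h p).
by rewrite subr0 !pid.
Qed.

Lemma QM_props : irreducible QM /\ quasicoherent QM /\
  exists m0 : QM, act p m0 = m0 /\ m0 <> 0.
Proof.
split; last split.
- split; first by exists (pi p : QM); exact: pip_nz.
  move=> P [P0 [PD [PZ PA]]].
  case: (classic (forall x, P x -> x = 0)) => [h|h]; [by left | right].
  have [xi hxi] := not_all_ex_not _ _ h.
  have [Pxi xinz] := imply_to_and _ _ hxi.
  set y := val xi.
  have nR : ~ RR y 0.
    by move=> hR; apply: xinz; rewrite -(pi_val xi) pi0; apply/piE.
  have [b hb] : exists b, b ** (y ** p) = p.
    apply: NNPP => hn; apply: nR; rewrite /RR subr0; split; first by rewrite -amulA pid.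
    by move=> b hb; apply: hn; exists b.
  have Pp : P (pi p).
    have := PA b xi Pxi; rewrite /= -(pi_val xi) qactE.
    have -> : pi (b ** val xi) = pi p.
      by apply/piE; apply: RR0; rewrite amulBl -amulA hb pid subrr.
    by [].
  move=> q; have := PA (val q) _ Pp; rewrite /= qactE.
  have -> : pi (val q ** p) = q.
    rewrite -{2}(pi_val q); apply/piE; apply: RR0.
    by rewrite amulBl -amulA pid subrr.
  by [].
- move=> xi; have [u hu] := lu (val xi ** p); exists u.
  rewrite /= -{1}(pi_val xi) qactE -{2}(pi_val xi); apply/piE; apply: RR0.
  by rewrite amulBl -amulA hu subrr.
- exists (pi p : QM); split; last exact: pip_nz.
  by rewrite /= qactE pid.
Qed.

End Quot.
Section Mods.
Variable A : Alg.
Variable M : Mod A.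

Lemma cyclic_all : irreducible M -> (exists (a : A) (m : M), act a m <> 0) ->
  forall m1 : M, m1 <> 0 -> forall m : M, exists a, act a m1 = m.
Proof.
move=> [_ irr] [a0 [m2 h2]] m1 m1nz.
have [a1 ha1] : exists a, act a m1 <> 0.
  apply: NNPP => hn.
  have hZ : submodule (fun m : M => forall a, act a m = 0).
    split; first by move=> a; rewrite act0r.
    split; first by move=> x y hx hy a; rewrite actDr hx hy addr0.
    split; first by move=> c x hx a; rewrite actZr hx scaler0.
    by move=> b x hx a; rewrite -actA hx.
  case: (irr _ hZ) => [hz|hall].
    apply: m1nz; apply: hz => a; apply: NNPP => h; apply: hn; by exists a.
  by apply: h2; apply: hall.
have hP : submodule (fun m : M => exists a, act a m1 = m).
  split; first by exists 0; rewrite act0l.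
  split; first by move=> x y [a <-] [b <-]; exists (a + b); rewrite actDl.
  split; first by move=> c x [a <-]; exists (c *: a); rewrite actZl.
  by move=> b x [a <-]; exists (b ** a); rewrite actA.
case: (irr _ hP) => [hz|hall]; last by [].
by exfalso; apply: ha1; apply: hz; exists a1.
Qed.

Lemma quot_nz (p : A) : is_idem p -> irreducible M -> quotient_of_Ae M p ->
  exists m : M, act p m <> 0.
Proof.
move=> pid [[xi xinz] _] [f [[_ [_ hmul]] onto]].
have [x [a hx] fx] := onto xi.
have Aep : Ae p p by exists p; rewrite pid.
have hxp : x ** p = x by rewrite hx -amulA pid.
have hfp : act p (f p) = f p by rewrite -hmul // pid.
exists (f p); rewrite hfp => h0; apply: xinz.
by rewrite -fx -hxp hmul // h0 act0r.
Qed.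

Lemma nz_quot (p : A) : is_idem p -> irreducible M -> (exists m : M, act p m <> 0) ->
  quotient_of_Ae M p.
Proof.
move=> pid irr [m hm].
set m0 := act p m.
have hm0 : act p m0 = m0 by rewrite /m0 -actA pid.
exists (fun x => act x m0); split.
  split; first by move=> x y _ _; rewrite actDl.
  split; first by move=> c x _; rewrite actZl.
  by move=> a x _; rewrite actA.
move=> m'; have [a ha] := cyclic_all irr (ex_intro _ p (ex_intro _ m hm)) hm m'.
exists (a ** p); first by exists a.
by rewrite actA hm0.
Qed.

Lemma act_pw (p x : A) (m0 : M) k : act p m0 = m0 -> act x m0 = m0 -> act (pw p x k) m0 = m0.
Proof.
move=> hp hx; elim: k => [|k IH]; first by rewrite pw0.
by rewrite pwS actA IH.
Qed.

Lemma equiv_of_simple (p q : A) (m0 m1 : M) : primitive p -> fin_dim (corner p p) ->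
  primitive q -> irreducible M -> act p m0 = m0 -> m0 <> 0 -> act q m1 <> 0 ->
  idem_equiv p q.
Proof.
move=> [pid [pnz pprim]] fdp [qid [qnz qprim]] irr hp0 m0nz hq1.
have ex0 : exists (a : A) (m : M), act a m <> 0 by exists p, m0; rewrite hp0.
have [a ha] := cyclic_all irr ex0 m0nz m1.
pose u := q ** a ** p.
have hu : act u m0 = act q m1 by rewrite /u !actA hp0 ha.
have unz : act u m0 <> 0 by rewrite hu.
have [b hb] := cyclic_all irr ex0 unz m0.
pose x := p ** b ** u.
have hxB : inB p x.
  split; first by rewrite /x !amulA pid.
  by rewrite /x /u -!amulA pid.
have hx0 : act x m0 = m0 by rewrite /x actA actA hb hp0.
case: (nil_or_unit pid pprim fdp hxB) => [[w [[hw1 hw2] [hwx _]]]|[k hk]]; last first.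
  by exfalso; apply: m0nz; rewrite -(act_pw k hp0 hx0) hk act0l.
pose v := w ** p ** b ** q.
have hvu : v ** u = p.
  by rewrite -[RHS]hwx /v /x /u !amulA -(amulA _ q q) qid.
have hup : u ** p = u by rewrite /u -amulA pid.
have hqu : q ** u = u by rewrite /u !amulA qid.
have hvq : v ** q = v by rewrite /v -amulA qid.
pose z := u ** v.
have zid : is_idem z by rewrite /is_idem /z -amulA (amulA v) hvu amulA hup.
have zle : idem_le z q by split; [rewrite /z amulA hqu | rewrite /z -amulA hvq].
case: (qprim z zid zle) => hz.
  exfalso; apply: pnz; rewrite -pid -{1}hvu -hvu amulA -(amulA v u v).
  by rewrite -/z hz amulr0 amul0r.
exists u, v; split; first by exists a.
split; last by split.
by exists (w ** p ** b); rewrite /v !amulA hw1.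
Qed.

Lemma rad_part (ep : A) (m0 : M) : primitive ep -> fin_dim (corner ep ep) ->
  irreducible M -> act ep m0 = m0 -> m0 <> 0 ->
  exists N, is_rad ep N /\ iso_quot_Ae M ep N.
Proof.
move=> [pid [pnz pprim]] fdp irr hp0 m0nz.
have ex0 : exists (a : A) (m : M), act a m <> 0 by exists ep, m0; rewrite hp0.
pose N := fun x : A => Ae ep x /\ act x m0 = 0.
have Aep : Ae ep ep by exists ep; rewrite pid.
exists N; split; last first.
  exists (fun x => act x m0); split.
    split; first by move=> x y _ _; rewrite actDl.
    split; first by move=> c x _; rewrite actZl.
    by move=> a x _; rewrite actA.
  split; last by move=> x hx; split => [h|[]//]; split.
  move=> m'; have [a ha] := cyclic_all irr ex0 m0nz m'.
  by exists (a ** ep); [exists a | rewrite actA hp0].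
split.
  split; last by exists ep => // -[_]; rewrite hp0.
  split; first by move=> x [].
  split; first by split; [exists 0; rewrite amul0r | rewrite act0l].
  split; first by move=> x y [[a ->] hx] [[b ->] hy]; split; [exists (a + b); rewrite amulDl | rewrite actDl hx hy addr0].
  split; first by move=> c x [[a ->] hx]; split; [exists (c *: a); rewrite amulZl | rewrite actZl hx scaler0].
  by move=> b x [[a ->] hx]; split; [exists (b ** a); rewrite amulA | rewrite actA hx act0r].
move=> P [[Psub [P0 [PD [PZ PM]]]] [y [c hy] nPy]] x Px.
have Aex := Psub _ Px; split => //.
apply: NNPP => hxm.
have [b hb] := cyclic_all irr ex0 hxm m0.
have [d hd] := Aex.
have hxe : x ** ep = x by rewrite hd -amulA pid.
pose t := ep ** b ** x.
have htB : inB ep t by split; [rewrite /t !amulA pid | rewrite /t -amulA hxe].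
have ht0 : act t m0 = m0 by rewrite /t !actA hb hp0.
case: (nil_or_unit pid pprim fdp htB) => [[w [_ [hwt _]]]|[k hk]]; last first.
  by apply: m0nz; rewrite -(act_pw k hp0 ht0) hk act0l.
have Pe : P ep by rewrite -hwt /t !amulA; apply: PM.
by apply: nPy; rewrite hy; apply: PM.
Qed.
End Mods.
Section Chain.
Variable A : Alg.

Definition orth_fam (s : seq A) := forall k l, (k < size s)%N -> (l < size s)%N -> k != l ->
  s`_k ** s`_l = 0.

Lemma orth_cons x s : orth_fam s -> (forall q, q \in s -> x ** q = 0 /\ q ** x = 0) ->
  orth_fam (x :: s).
Proof.
move=> h hx [|k] [|l] //= hk hl hkl.
- by case: (hx _ (mem_nth 0 hl)).
- by case: (hx _ (mem_nth 0 hk)).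
- exact: h.
Qed.

Lemma indep (s0 L : seq A) : (forall v, v \in L -> is_idem v /\ v <> 0 /\ inspan s0 v) ->
  orth_fam L -> (size L <= size s0)%N.
Proof.
move=> hL ho; rewrite leqNgt; apply/negP => hlt.
have [c [[j cj] hs]] := dep (fun v hv => (proj2 (proj2 (hL v hv)))) hlt.
have hj := hL _ (mem_nth 0 (ltn_ord j)).
have := congr1 (amul L`_j) hs; rewrite amul_sumr amulr0 (bigD1 j) //= big1; last first.
  by move=> k hk; rewrite amulZr ho ?scaler0 ?ltn_ord // eq_sym.
rewrite addr0 amulZr (proj1 hj) => /eqP; rewrite scaler_eq0 (negbTE cj) /= => /eqP.
by case: hj => _ [].
Qed.

Variable M : Mod A.
Variable ej : A.
Hypothesis ejid : ej ** ej = ej.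
Variable s0 : seq A.
Hypothesis hs0 : forall x, corner ej ej x -> inspan s0 x.

Definition goodfam (qs : seq A) (p : A) :=
  (forall q, q \in qs -> is_idem q /\ q <> 0 /\ ej ** q = q /\ q ** ej = q) /\
  orth_fam qs /\ (forall q, q \in qs -> p ** q = 0 /\ q ** p = 0) /\
  is_idem p /\ ej ** p = p /\ p ** ej = p /\ exists m : M, act p m <> 0.

Lemma step qs p f g : goodfam qs p -> is_idem f -> is_idem g -> f ** g = 0 -> g ** f = 0 ->
  p ** f = f -> f ** p = f -> p ** g = g -> g ** p = g -> g <> 0 ->
  (exists m : M, act f m <> 0) -> goodfam (g :: qs) f.
Proof.
move=> [hq [ho [hpq [pid [hep [hpe hm]]]]]] fid gid hfg hgf hpf hfp hpg hgp gnz hfm.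
split.
  move=> q; rewrite inE => /orP [/eqP ->|/hq //].
  by split => //; split => //; split; [rewrite -hpg amulA hep | rewrite -hgp -amulA hpe].
split.
  apply: orth_cons => // q hqin; have [h1 h2] := hpq q hqin.
  by split; [rewrite -hgp -amulA h1 amulr0 | rewrite -hpg amulA h2 amul0r].
split.
  move=> q; rewrite inE => /orP [/eqP ->|hqin] //.
  have [h1 h2] := hpq q hqin.
  by split; [rewrite -hfp -amulA h1 amulr0 | rewrite -hpf amulA h2 amul0r].
split => //; split; first by rewrite -hpf amulA hep.
by split => //; rewrite -hfp -amulA hpe.
Qed.

Lemma chain d : forall qs p, goodfam qs p -> (size s0 < size qs + 1 + d)%N ->
  exists p', primitive p' /\ exists m : M, act p' m <> 0.
Proof.
elim: d => [|d IH] qs p hg hsz.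
  exfalso; move: hsz; rewrite addn0 addn1 ltnNge => /negP; apply.
  case: hg => [hq [ho [hpq [pid [hep [hpe [m hm]]]]]]].
  have pnz : p <> 0 by move=> h; apply: hm; rewrite h act0l.
  apply: (@indep s0 (p :: qs)).
    move=> v; rewrite inE => /orP [/eqP ->|/hq [vid [vnz [h1 h2]]]].
      by split => //; split => //; apply: hs0; exists p; rewrite hep hpe.
    by split => //; split => //; apply: hs0; exists v; rewrite h1 h2.
  by apply: orth_cons.
have hg' := hg; case: hg' => [hq [ho [hpq [pid [hep [hpe [m hm]]]]]]].
have pnz : p <> 0 by move=> h; apply: hm; rewrite h act0l.
case: (classic (primitive p)) => hprim; first by exists p; split => //; exists m.
have [f [fid [[hpf hfp] [fnz fnp]]]] : exists f, is_idem f /\ idem_le f p /\ f <> 0 /\ f <> p.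
  apply: NNPP => hn; apply: hprim; split => //; split => // f fid hle.
  case: (classic (f = 0)) => [|f0]; first by left.
  case: (classic (f = p)) => [|fp]; first by right.
  by exfalso; apply: hn; exists f.
pose g := p - f.
have gid : is_idem g.
  by rewrite /is_idem /g amulBl !amulBr pid hpf hfp fid subrr subr0.
have hfg : f ** g = 0 by rewrite /g amulBr hfp fid subrr.
have hgf : g ** f = 0 by rewrite /g amulBl hpf fid subrr.
have hpg : p ** g = g by rewrite /g amulBr pid hpf.
have hgp : g ** p = g by rewrite /g amulBl pid hfp.
have gnz : g <> 0 by move=> /eqP; rewrite subr_eq0 => /eqP h; apply: fnp.
have fnz' : f <> 0 by [].
have hsz' : forall x, (size s0 < size (x :: qs) + 1 + d)%N.
  by move=> x; rewrite /= !addSn -addnS.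
case: (classic (act f m = 0)) => hf.
  have hgm : act g m <> 0 by move=> h; apply: hm; rewrite -(subrK f p) -/g actDl h hf addr0.
  apply: (IH (f :: qs) g _ (hsz' f)).
  by apply: (step hg) => //; rewrite ?hpf ?hfp //; exists m.
apply: (IH (g :: qs) f _ (hsz' g)).
by apply: (step hg) => //; exists m.
Qed.
End Chain.

Lemma prim_exists (A : Alg) (HA : AUF A) (M : Mod A) : irreducible M -> quasicoherent M ->
  exists p, primitive p /\ exists m : M, act p m <> 0.
Proof.
move=> [[m mnz] _] qc.
case: HA => I [e [eid [eorth [fde hs]]]].
have [j [m' hm']] : exists j (m' : M), act (e j) m' <> 0.
  apply: NNPP => hn.
  have [a ha] := qc m; have [s hsa] := hs a.
  apply: mnz; rewrite -ha hsa act_suml big1 // => t _.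
  rewrite -!amulA actA; apply: NNPP => h; apply: hn; by exists t.1.1, (act (t.2 ** e t.1.2) m).
have [s0 hs0] := fde j j.
apply: (@chain A M (e j) s0 hs0 (size s0) [::] (e j)); last by rewrite add0n add1n.
split => //; split; first by move=> k l.
split => //; split; first exact: eid.
by split; [exact: eid | split; [exact: eid | exists m']].
Qed.
Lemma e_nz (A : Alg) (M : Mod A) (n : nat) (eps : 'I_n -> A) (e : A) :
  (forall i, is_idem (eps i)) -> (forall i j, i != j -> eps i ** eps j = 0) ->
  e = \sum_(i < n) eps i ->
  ((exists m : M, act e m <> 0) <-> exists i (m : M), act (eps i) m <> 0).
Proof.
move=> Hid Horth Hsum; split.
  move=> [m hm]; apply: NNPP => hn; apply: hm.
  rewrite Hsum act_suml big1 // => i _; apply: NNPP => h; apply: hn; by exists i, m.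
move=> [i [m hm]]; exists (act (eps i) m); rewrite -actA.
have -> : e ** eps i = eps i.
  rewrite Hsum amul_suml (bigD1 i) //= big1 ?addr0; first exact: Hid.
  by move=> j hj; apply: Horth.
by [].
Qed.

Theorem proposition6p2 (A : Alg) (HA : AUF A) (e : A) (He : is_idem e)
  (n : nat) (eps : 'I_n -> A)
  (Hprim : forall i, primitive (eps i))
  (Horth : forall i j, i != j -> amul (eps i) (eps j) = 0)
  (Hsum : e = \sum_(i < n) eps i) :
  (generating e <-> (forall p : A, primitive p -> exists i, idem_equiv p (eps i))) /\
  (generating e <->
     (forall M : Mod A, irreducible M -> quasicoherent M ->
        exists i, exists N, is_rad (eps i) N /\ iso_quot_Ae M (eps i) N)).
Proof.
have Hid i : is_idem (eps i) by case: (Hprim i).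
have fd := AUF_fd HA.
have lu := AUF_lunit HA.
pose G' := forall M : Mod A, irreducible M -> quasicoherent M ->
  exists i (m : M), act (eps i) m <> 0.
have genG : generating e <-> G'.
  split.
    move=> H M irr qc; apply/(e_nz M Hid Horth Hsum).
    exact: quot_nz He irr (H M irr qc).
  move=> H M irr qc; apply: (nz_quot He irr).
  by apply/(e_nz M Hid Horth Hsum); apply: (H M irr qc).
have G2 : G' <-> (forall p : A, primitive p -> exists i, idem_equiv p (eps i)).
  split.
    move=> H p hp; have hp' := hp; case: hp' => [pid [pnz pprim]].
    have [irr [qc [m0 [hm0 m0nz]]]] := QM_props pid pnz pprim (fd p p) lu.
    have [i [m1 hm1]] := H _ irr qc.
    exists i; exact: equiv_of_simple hp (fd p p) (Hprim i) irr hm0 m0nz hm1.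
  move=> H M irr qc.
  have [p [hp [m hm]]] := prim_exists HA irr qc.
  have [i [u [v [[a hu] [[b hv] [hvu huv]]]]]] := H p hp.
  exists i, (act a (act p m)); rewrite -!actA -hu => h0; apply: hm.
  by rewrite -hvu actA h0 act0r.
have G3 : G' <-> (forall M : Mod A, irreducible M -> quasicoherent M ->
        exists i, exists N, is_rad (eps i) N /\ iso_quot_Ae M (eps i) N).
  split.
    move=> H M irr qc; have [i [m1 hm1]] := H M irr qc.
    exists i; apply: (rad_part (Hprim i) (fd _ _) irr (m0 := act (eps i) m1)) => //.
    by rewrite -actA Hid.
  move=> H M irr qc; have [i [N [_ [f [hf [honto _]]]]]] := H M irr qc.
  exists i; apply: quot_nz (Hid i) irr _.
  by exists f.
split; [exact: iff_trans genG G2 | exact: iff_trans genG G3].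
Qed.
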